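(* Let $(X,\mathcal{A},\mu)$ be a probability space, $\theta$ a measure-preserving endomorphism, $\varphi$ a ceiling function, and $(\overline{X},\overline{\mu},(\Phi_t))$ the associated special flow. Let $\overline{A}\subset\overline{X}$ be a hole such that for some $\lambda>0$ the limit \[\alpha:=\lim_{n\to\infty}-\frac{1}{n\lambda}\log\overline{\mu}\big(\{(x,s)\in\overline{X}:\forall\tau\in[0,n\lambda]:\Phi_\tau(x,s)\notin\overline{A}\}\big)\] exists. Then for every sequence $(t_k)_{k\in\mathbb{N}}$ of positive reals with $t_k\to\infty$ the limit \[\lim_{k\to\infty}-\frac{1}{t_k}\log\overline{\mu}\big(\{(x,s)\in\overline{X}:\forall\tau\in[0,t_k]:\Phi_\tau(x,s)\notin\overline{A}\}\big)\] exists and equals $\alpha$. In particular the escape rate $\rho(\overline{A},\varphi)$ exists and equals $\alpha$.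
   Context: A ceiling function is a measurable $\varphi:X\to\mathbb{R}$ with $\inf\varphi>0$. $S_n\varphi=\sum_{k=0}^{n-1}\varphi\circ\theta^k$, $N_t^\varphi(x)=\min\{n\in\mathbb{N}_0:S_n\varphi(x)>t\}$. Special flow: $\overline{X}=\{(x,s):0\le s<\varphi(x)\}$ with $\overline{\mu}$ the restriction of $\mu\otimes$Lebesgue; $\Phi_t(x,s)=(x,s+t)$ if $t<\varphi(x)-s$ and $\Phi_t(x,s)=(\theta^{N-1}x,s+t-S_{N-1}\varphi(x))$ with $N=N^\varphi_{s+t}(x)$ otherwise. A hole is a measurable $\overline{A}\subset\overline{X}$ with $\bigcup_{t\ge0}\Phi_t^{-1}(\overline{A})=\overline{X}$ a.e. and $\bigcup_{t\in[0,\tau]}\Phi_t^{-1}(\overline{A})$ measurable for all $\tau\ge0$. The escape rate $\rho(\overline{A},\varphi)$ is $\lim_{t\to\infty}-\frac1t\log\overline{\mu}(\{(x,s):\forall\tau\in[0,t]:\Phi_\tau(x,s)\notin\overline{A}\})$ when this limit exists (i.e. limsup and liminf coincide). *)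

(* Defs.v *)
From HB Require Import structures.
From mathcomp Require Import all_boot all_order all_algebra.
From mathcomp Require Import all_classical all_reals all_analysis.
Set Implicit Arguments. Unset Strict Implicit. Unset Printing Implicit Defensive.
Import Order.TTheory GRing.Theory Num.Theory.
Local Open Scope classical_set_scope.
Local Open Scope ring_scope.

Section SpecialFlow.
Context {d : measure_display} {X : measurableType d} {R : realType}.

Definition Ssum (theta : X -> X) (phi : X -> R) (n : nat) (x : X) : R :=
  \sum_(k < n) phi (iter k theta x).

(* N_t^phi(x) = min {n : S_n phi x > t} (default 0 if the set is empty,
   which never happens for a ceiling function) *)
Definition Nphi (theta : X -> X) (phi : X -> R) (t : R) (x : X) : nat :=
  xget 0%N [set n | t < Ssum theta phi n x /\
                    forall m, t < Ssum theta phi m x -> (n <= m)%N].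

Definition ceiling (phi : X -> R) : Prop :=
  measurable_fun setT phi /\ exists c : R, 0 < c /\ forall x, c <= phi x.

Definition measure_preserving (mu : set X -> \bar R) (theta : X -> X) : Prop :=
  measurable_fun setT theta /\
  forall A, measurable A -> mu (theta @^-1` A) = mu A.

Definition Xbar (phi : X -> R) : set (X * R) :=
  [set p | 0 <= p.2 /\ p.2 < phi p.1].

Definition mubar (mu : set X -> \bar R) (phi : X -> R) (E : set (X * R)) : \bar R :=
  (mu \x (@lebesgue_measure R))%E (E `&` Xbar phi).

Definition Phi (theta : X -> X) (phi : X -> R) (t : R) (p : X * R) : X * R :=
  let: (x, s) := p in
  if t < phi x - s then (x, s + t)
  else let N := Nphi theta phi (s + t) x in
       (iter N.-1 theta x, s + t - Ssum theta phi N.-1 x).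

Definition hit (theta : X -> X) (phi : X -> R) (A : set (X * R)) (I : set R) :=
  \bigcup_(t in I) (Xbar phi `&` (Phi theta phi t @^-1` A)).

Definition hole (mu : set X -> \bar R) (theta : X -> X) (phi : X -> R)
  (A : set (X * R)) : Prop :=
  [/\ measurable A, A `<=` Xbar phi,
      mubar mu phi (Xbar phi `\` hit theta phi A `[0, +oo[) = 0%E &
      forall tau, 0 <= tau -> measurable (hit theta phi A `[0, tau])].

Definition survivor (theta : X -> X) (phi : X -> R) (A : set (X * R)) (t : R) :=
  [set p | Xbar phi p /\ forall tau, 0 <= tau <= t -> ~ A (Phi theta phi tau p)].

(* - (1/t) log mubar(survivor t), in the extended reals (log 0 = -oo) *)
Definition esc (mu : set X -> \bar R) (theta : X -> X) (phi : X -> R)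
  (A : set (X * R)) (t : R) : \bar R :=
  ((- t^-1)%:E * lne (mubar mu phi (survivor theta phi A t)))%E.

End SpecialFlow.

(* Main.v *)
Require Import Defs.
From HB Require Import structures.
From mathcomp Require Import all_boot all_order all_algebra.
From mathcomp Require Import all_classical all_reals all_analysis.
From mathcomp Require Import ring lra.
Import Order.TTheory GRing.Theory Num.Theory.
Local Open Scope classical_set_scope.
Local Open Scope ring_scope.

Section Gen.
Context {R : realType}.

Definition ee (L : R -> \bar R) (t : R) : \bar R := ((- t^-1)%:E * L t)%E.

Lemma ee_scale (L : R -> \bar R) (s t : R) : 0 < s -> 0 < t ->
  (ee L s * (s / t)%:E)%E = ((- t^-1)%:E * L s)%E.
Proof.
move=> s0 t0; rewrite /ee muleAC -EFinM muleC.
have -> : - s^-1 * (s / t) = - t^-1.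
  by rewrite mulNr mulKf // gt_eqF.
by rewrite muleC.
Qed.

Lemma nmul_le (c : R) (a b : \bar R) : 0 <= c -> (b <= a)%E ->
  ((- c)%:E * a <= (- c)%:E * b)%E.
Proof.
by move=> c0 ba; rewrite EFinN !mulNe leeN2; apply: lee_wpmul2l; rewrite ?lee_fin.
Qed.

Lemma gen {T} (F : set_system T) {FF : ProperFilter F} (L : R -> \bar R)
  (lam : R) (alpha : \bar R) (tk : T -> R) :
  0 < lam -> (forall s t, 0 <= s -> s <= t -> (L t <= L s)%E) ->
  (fun n : nat => ee L (n%:R * lam)) @ \oo --> alpha ->
  tk @ F --> +oo ->
  (fun x => ee L (tk x)) @ F --> alpha.
Proof.
move=> lam0 Lmon ha htk.
pose n x := Num.Def.trunc (tk x / lam).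
have ev : \forall x \near F, lam < tk x by move/cvgryPgt : htk; apply.
have nb x : lam < tk x -> (n x)%:R * lam <= tk x < (n x).+1%:R * lam /\ (1 <= n x)%N.
  move=> h; have t0 : 0 <= tk x / lam by rewrite divr_ge0// ltW// (lt_trans lam0).
  have /andP[a b] := trunc_itv t0; split.
    by rewrite -ler_pdivlMr// -ltr_pdivrMr// a b.
  rewrite -ltnS -(ltr_nat R) (le_lt_trans _ b)// ler_pdivlMr// mul1r ltW//.
have hn : n @ F --> \oo.
  apply/cvgnyPge => A; move/cvgryPge : htk => /(_ (A%:R * lam)) h1.
  near=> x; have hx : lam < tk x by near: x; exact: ev.
  have [/andP[_ b] _] := nb x hx.
  have : A%:R * lam < (n x).+1%:R * lam by apply: le_lt_trans b; near: x.
  by rewrite ltr_pM2r// ltr_nat ltnS.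
have ev2 : \forall x \near F, lam < tk x /\ 0 < tk x.
  apply: filterS ev => x h; split=> //; exact: lt_trans h.
have rat1 : forall k : T -> nat, (forall x, lam < tk x -> 
      `|tk x - (k x)%:R * lam| <= lam) ->
    (fun x => ((k x)%:R * lam / tk x)%:E) @ F --> 1%:E.
  move=> k hk; apply/fine_cvgP; split; first exact: nearW.
  apply/cvgrPdist_le => eps e0.
  move/cvgryPge : htk => /(_ (lam / eps)) h1.
  near=> x; have [h2 t0] : lam < tk x /\ 0 < tk x by near: x; exact: ev2.
  have -> : 1 - (k x)%:R * lam / tk x = (tk x - (k x)%:R * lam) / tk x.
    by rewrite mulrBl divff // gt_eqF.
  rewrite normrM [X in _ * X]gtr0_norm ?invr_gt0 // ler_pdivrMr // (le_trans (hk x h2)) //.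
  by rewrite -ler_pdivrMl // mulrC; near: x.
have lo : (fun x => (ee L ((n x)%:R * lam) * ((n x)%:R * lam / tk x)%:E)%E) @ F --> alpha.
  rewrite -[alpha]mule1; apply: cvgeM.
  - by case: (alpha) => [r||]; rewrite /mule_def ?oner_neq0.
  - exact: (cvg_comp _ _ hn ha).
  apply: rat1 => x h; have [/andP[a b] _] := nb x h.
  rewrite ger0_norm ?subr_ge0 // lerBlDr; move: (ltW b).
  by rewrite -natr1 mulrDl mul1r addrC.
have hn' : (fun x => (n x).+1) @ F --> \oo.
  apply/cvgnyPge => A; move/cvgnyPge : hn => /(_ A).
  by apply: filterS => x /leqW.
have up : (fun x => (ee L ((n x).+1%:R * lam) * ((n x).+1%:R * lam / tk x)%:E)%E) @ F --> alpha.
  rewrite -[alpha]mule1; apply: cvgeM.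
  - by case: (alpha) => [r||]; rewrite /mule_def ?oner_neq0.
  - exact: (cvg_comp _ _ hn' ha).
  apply: (rat1 (fun x => (n x).+1)) => x h; have [/andP[a b] _] := nb x h.
  rewrite distrC ger0_norm ?subr_ge0 ?(ltW b) // lerBlDl; move: a.
  by rewrite -natr1 mulrDl mul1r addrC [tk x + _]addrC lerD2l.
apply: squeeze_cvge lo up; near=> x.
have [h t0] : lam < tk x /\ 0 < tk x by near: x; exact: ev2.
have [/andP[a b] n1] := nb x h.
have np : 0 < (n x)%:R * lam by rewrite mulr_gt0 // ltr0n.
have np2 : 0 < (n x).+1%:R * lam := lt_trans t0 b.
rewrite !ee_scale // /ee.
have c0 : 0 <= (tk x)^-1 by rewrite invr_ge0 ltW.
rewrite (nmul_le _ _ _ c0 (Lmon _ _ (ltW np) a)) /=.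
rewrite (nmul_le _ _ _ c0 (Lmon _ _ (le_trans (ltW np) a) (ltW b))) //.
Unshelve. all: end_near. Qed.
End Gen.
Lemma Xbar_meas (d : measure_display) (X : measurableType d) (R : realType)
  (phi : X -> R) : measurable_fun setT phi -> measurable (Xbar phi).
Proof.
move=> mphi.
have m1 : measurable_fun setT (fun p : X * R => 0 <= p.2).
  apply: (@measurable_realfun.measurable_fun_ler _ _ _ _ (fun _ => 0) snd); [exact: measurable_cst|exact: measurable_snd].
have m2 : measurable_fun setT (fun p : X * R => p.2 < phi p.1).
  apply: measurable_realfun.measurable_fun_ltr measurable_snd _.
  exact: measurableT_comp mphi measurable_fst.
have mt : measurable [set true] by [].
have := measurableI _ _ (m1 measurableT _ mt)
  (m2 measurableT _ mt).
by rewrite !setTI.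
Qed.

Lemma surv_eq (d : measure_display) (X : measurableType d) (R : realType)
  (theta : X -> X) (phi : X -> R) (A : set (X * R)) (t : R) :
  survivor theta phi A t `&` Xbar phi = Xbar phi `\` hit theta phi A `[0, t].
Proof.
apply/seteqP; split => p /=.
  move=> [[xp h] _]; split => //; case => tau /=; rewrite in_itv /= => ht [_ hA].
  exact: h ht hA.
move=> [xp nh]; split => //; split => // tau ht hA; apply: nh.
by exists tau => //=; rewrite in_itv.
Qed.

Theorem lemma3p8 (d : measure_display) (X : measurableType d) (R : realType)
  (mu : probability X R) (theta : X -> X) (phi : X -> R)
  (A : set (X * R)) (lambda : R) (alpha : \bar R) :
  measure_preserving mu theta ->
  ceiling phi ->
  hole mu theta phi A ->
  0 < lambda ->
  (fun n : nat => esc mu theta phi A (n%:R * lambda)) @ \oo --> alpha ->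
  (forall tk : nat -> R, (forall k, 0 < tk k) -> tk @ \oo --> +oo ->
     (fun k => esc mu theta phi A (tk k)) @ \oo --> alpha) /\
  (esc mu theta phi A t @[t --> +oo] --> alpha).
Proof.
move=> _ [mphi _] [_ _ _ mhit] lam0 ha.
pose L t := lne (mubar mu phi (survivor theta phi A t)).
have Lmon : forall s t, 0 <= s -> s <= t -> (L t <= L s)%E.
  move=> s t s0 st; rewrite /L lee_lne ?in_itv /= ?measure_ge0 ?leey //.
  rewrite /mubar !surv_eq; apply: le_measure; rewrite ?inE.
  - apply: measurableD; [exact: Xbar_meas|exact: mhit (le_trans s0 st)].
  - apply: measurableD; [exact: Xbar_meas|exact: mhit].
  apply: setDS => p [tau /=]; rewrite in_itv /= => /andP[t0 ts] h.
  by exists tau => //=; rewrite in_itv /= t0 (le_trans ts st).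
have ha' : (fun n : nat => ee L (n%:R * lambda)) @ \oo --> alpha by exact: ha.
split.
  move=> tk _ htk; exact: (gen _ _ _ _ _ lam0 Lmon ha' htk).
exact: (gen _ _ _ _ (fun t => t) lam0 Lmon ha' cvg_id).
Qed.
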